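(* Let $\mathbb{T}=(T,\eta,\mu)$ be a monad on a category $\mathcal{K}$ with Eilenberg–Moore category $\mathsf{Alg}(\mathbb{T})$. Suppose there is a full subcategory $l:\mathcal{A}\hookrightarrow\mathcal{K}$ such that $\mathbb{T}$ is idempotent at every object of $\mathcal{A}$ (i.e. $\mu_a$ is an isomorphism for every $a\in\mathcal{A}$), and such that $\mathcal{A}$, viewed as a full subcategory of $\mathsf{Alg}(\mathbb{T})$ via $a\mapsto(a,\eta_a^{-1})$, is codense in $\mathsf{Alg}(\mathbb{T})$. Then $\mathbb{T}$ is generically idempotent; more precisely $T\cong\mathrm{Ran}_l l$.
   Context: A monad is generically idempotent if it is isomorphic to the codensity monad (the monad structure on $\mathrm{Ran}_l l$) of some full subcategory $l:\mathcal{A}\hookrightarrow\mathcal{K}$. An object $k$ is a fixed point of $\mathbb{T}$ if $\eta_k$ is an isomorphism; $\mathbb{T}$ is idempotent at $k$ iff $k$ is a fixed point, and fixed points form a full subcategory of $\mathsf{Alg}(\mathbb{T})$ (with structure map $\eta_k^{-1}$). A full subcategory $J:\mathcal{A}\hookrightarrow\mathcal{C}$ is codense if $\mathrm{Ran}_J J\cong\mathrm{id}_{\mathcal{C}}$. *)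

(* Defs.v *)
From Stdlib Require Import ProofIrrelevance.

Set Implicit Arguments.
Unset Strict Implicit.

Record Category := {
  Obj :> Type;
  Hom : Obj -> Obj -> Type;
  idm : forall a, Hom a a;
  comp : forall a b c, Hom b c -> Hom a b -> Hom a c;
  comp_idl : forall a b (f : Hom a b), comp (idm b) f = f;
  comp_idr : forall a b (f : Hom a b), comp f (idm a) = f;
  comp_assoc : forall a b c d (h : Hom c d) (g : Hom b c) (f : Hom a b),
      comp h (comp g f) = comp (comp h g) f }.

Arguments Hom {_} _ _.
Arguments idm {_} _.
Arguments comp {_ _ _ _} _ _.
Arguments comp_idl {_ _ _} _.
Arguments comp_idr {_ _ _} _.
Arguments comp_assoc {_ _ _ _ _} _ _ _.

Notation "g ∘ f" := (comp g f) (at level 40, left associativity).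

Record Functor (C D : Category) := {
  fobj :> C -> D;
  fmap : forall a b, Hom a b -> Hom (fobj a) (fobj b);
  fmap_id : forall a, fmap (idm a) = idm (fobj a);
  fmap_comp : forall a b c (g : Hom b c) (f : Hom a b),
      fmap (g ∘ f) = fmap g ∘ fmap f }.

Arguments fmap {C D} _ {a b} _.
Arguments fmap_id {C D} _ a.
Arguments fmap_comp {C D} _ {a b c} _ _.

Definition IdFunctor (C : Category) : Functor C C :=
  {| fobj := fun x => x;
     fmap := fun a b f => f;
     fmap_id := fun a => eq_refl;
     fmap_comp := fun a b c g f => eq_refl |}.

(** A functor is fully faithful (the inclusion of a full subcategory). *)
Definition FullyFaithful (C D : Category) (F : Functor C D) : Prop :=
  forall a b : C,
    (forall f g : Hom a b, fmap F f = fmap F g -> f = g) /\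
    (forall h : Hom (F a) (F b), exists f : Hom a b, fmap F f = h).

Definition IsIso (C : Category) (a b : C) (f : Hom a b) : Prop :=
  exists g : Hom b a, g ∘ f = idm a /\ f ∘ g = idm b.

Definition IsRightKan (A B C : Category) (l : Functor A B) (F : Functor A C)
  (R : Functor B C) (eps : forall a : A, Hom (R (l a)) (F a)) : Prop :=
  (forall a a' (f : Hom a a'), eps a' ∘ fmap R (fmap l f) = fmap F f ∘ eps a) /\
  forall (S : Functor B C) (sigma : forall a : A, Hom (S (l a)) (F a)),
    (forall a a' (f : Hom a a'), sigma a' ∘ fmap S (fmap l f) = fmap F f ∘ sigma a) ->
    exists tau : forall b : B, Hom (S b) (R b),
      ((forall b b' (g : Hom b b'), tau b' ∘ fmap S g = fmap R g ∘ tau b) /\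
       (forall a, eps a ∘ tau (l a) = sigma a)) /\
      (forall tau' : forall b : B, Hom (S b) (R b),
         (forall b b' (g : Hom b b'), tau' b' ∘ fmap S g = fmap R g ∘ tau' b) ->
         (forall a, eps a ∘ tau' (l a) = sigma a) ->
         forall b, tau' b = tau b).
Arguments IsRightKan {A B C} l F R eps.

Definition Codense (A C : Category) (J : Functor A C) : Prop :=
  IsRightKan J J (IdFunctor C) (fun a => idm (J a)).

Record Monad (K : Category) := {
  T : Functor K K;
  eta : forall x : K, Hom x (T x);
  mu : forall x : K, Hom (T (T x)) (T x);
  eta_nat : forall x y (f : Hom x y), fmap T f ∘ eta x = eta y ∘ f;
  mu_nat : forall x y (f : Hom x y), fmap T f ∘ mu x = mu y ∘ fmap T (fmap T f);
  mu_eta_l : forall x, mu x ∘ eta (T x) = idm (T x);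
  mu_eta_r : forall x, mu x ∘ fmap T (eta x) = idm (T x);
  mu_assoc : forall x, mu x ∘ fmap T (mu x) = mu x ∘ mu (T x) }.

Arguments T {K} m.
Arguments eta {K} m x.
Arguments mu {K} m x.

(** [M] is the codensity monad of [l] (up to the identity isomorphism):
    there is a counit [eps : T l => l] exhibiting [T] as [Ran_l l], and the
    unit and multiplication of [M] are those of the codensity monad, i.e. the
    unique maps with [eps . eta_l = id] and [eps . mu_l = eps . T eps]. *)
Definition IsCodensityMonadOf (A K : Category) (l : Functor A K) (M : Monad K) : Prop :=
  exists eps : forall a : A, Hom (T M (l a)) (l a),
    IsRightKan l l (T M) eps /\
    (forall a, eps a ∘ eta M (l a) = idm (l a)) /\
    (forall a, eps a ∘ mu M (l a) = eps a ∘ fmap (T M) (eps a)).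
Arguments IsCodensityMonadOf {A K} l M.

Definition GenericallyIdempotent (K : Category) (M : Monad K) : Prop :=
  exists (A : Category) (l : Functor A K), FullyFaithful l /\ IsCodensityMonadOf l M.

Record Algebra (K : Category) (M : Monad K) := {
  acar : K;
  astr : Hom (T M acar) acar;
  alg_unit : astr ∘ eta M acar = idm acar;
  alg_assoc : astr ∘ mu M acar = astr ∘ fmap (T M) astr }.

Arguments acar {K M} _.
Arguments astr {K M} _.

Definition AlgHom (K : Category) (M : Monad K) (X Y : Algebra M) :=
  { f : Hom (acar X) (acar Y) | f ∘ astr X = astr Y ∘ fmap (T M) f }.

Lemma alg_hom_eq (K : Category) (M : Monad K) (X Y : Algebra M) (f g : AlgHom X Y) :
  proj1_sig f = proj1_sig g -> f = g.
Proof.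
  destruct f as [f Hf], g as [g Hg]; simpl; intros E; subst g.
  f_equal; apply proof_irrelevance.
Qed.

Section AlgCat.
Variables (K : Category) (M : Monad K).

Definition alg_id (X : Algebra M) : AlgHom X X.
Proof.
  exists (idm (acar X)). rewrite fmap_id, comp_idl, comp_idr. reflexivity.
Defined.

Definition alg_comp (X Y Z : Algebra M) (g : AlgHom Y Z) (f : AlgHom X Y) : AlgHom X Z.
Proof.
  exists (proj1_sig g ∘ proj1_sig f).
  destruct g as [g Hg], f as [f Hf]; simpl.
  rewrite <- comp_assoc, Hf, comp_assoc, Hg, <- comp_assoc, <- fmap_comp.
  reflexivity.
Defined.

Definition AlgCat : Category.
Proof.
  refine {| Obj := Algebra M; Hom := @AlgHom K M; idm := alg_id; comp := alg_comp |}.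
  - intros a b f; apply alg_hom_eq; simpl; apply comp_idl.
  - intros a b f; apply alg_hom_eq; simpl; apply comp_idr.
  - intros a b c d h g f; apply alg_hom_eq; simpl; apply comp_assoc.
Defined.

End AlgCat.

Section FixFunctor.
Variables (K A : Category) (M : Monad K) (l : Functor A K)
  (inv : forall a : A, Hom (T M (l a)) (l a))
  (Hinv1 : forall a, inv a ∘ eta M (l a) = idm (l a))
  (Hinv2 : forall a, eta M (l a) ∘ inv a = idm (T M (l a))).

Lemma fix_mu_eq (a : A) : mu M (l a) = fmap (T M) (inv a).
Proof.
  rewrite <- (comp_idr (mu M (l a))).
  rewrite <- (fmap_id (T M)), <- (Hinv2 a), fmap_comp, comp_assoc, mu_eta_r.
  apply comp_idl.
Qed.

Definition fixAlg (a : A) : Algebra M.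
Proof.
  refine {| acar := l a; astr := inv a; alg_unit := Hinv1 a |}.
  rewrite fix_mu_eq; reflexivity.
Defined.

Lemma fix_hom_ok (a b : A) (f : Hom a b) :
  fmap l f ∘ inv a = inv b ∘ fmap (T M) (fmap l f).
Proof.
  rewrite <- (comp_idl (fmap l f ∘ inv a)), <- (Hinv1 b).
  rewrite <- !comp_assoc, (comp_assoc (eta M (l b))), <- eta_nat.
  rewrite <- comp_assoc, Hinv2, comp_idr. reflexivity.
Qed.

Definition FixFunctor : Functor A (AlgCat M).
Proof.
  refine {| fobj := (fixAlg : A -> AlgCat M);
            fmap := fun a b f => exist _ (fmap l f) (fix_hom_ok f) |}.
  - intros a; apply alg_hom_eq; simpl; apply fmap_id.
  - intros a b c g f; apply alg_hom_eq; simpl; apply fmap_comp.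
Defined.

End FixFunctor.
Arguments FixFunctor {K A} M l inv Hinv1 Hinv2.

(* Main.v *)
Require Import Defs.

Section Aux.
Variables (K : Category) (M : Monad K).

Definition freeAlg (x : K) : Algebra M.
Proof.
  refine {| acar := T M x; astr := mu M x; alg_unit := mu_eta_l M x |}.
  symmetry; apply mu_assoc.
Defined.

Definition freeMap (x y : K) (f : Hom x y) : AlgHom (freeAlg x) (freeAlg y).
Proof. exists (fmap (T M) f). simpl. apply mu_nat. Defined.

Definition ext (X : Algebra M) (y : K) (g : Hom y (acar X)) : AlgHom (freeAlg y) X.
Proof.
  exists (astr X ∘ fmap (T M) g). simpl.
  rewrite fmap_comp, (comp_assoc (astr X)), <- alg_assoc.
  rewrite <- !comp_assoc, mu_nat. reflexivity.
Defined.

Definition Sbar (S0 : Functor K K) : Functor (AlgCat M) (AlgCat M).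
Proof.
  refine {| fobj := (fun X : AlgCat M => freeAlg (S0 (acar X)) : AlgCat M);
            fmap := fun X Y h => freeMap _ _ (fmap S0 (proj1_sig h)) |}.
  - intros X; apply alg_hom_eq; simpl. rewrite !fmap_id. reflexivity.
  - intros X Y Z g f; apply alg_hom_eq; simpl. rewrite !fmap_comp. reflexivity.
Defined.

End Aux.
Arguments freeAlg {K M} x.
Arguments freeMap {K M} x y f.
Arguments ext {K M} X y g.
Arguments Sbar {K} M S0.

Lemma kan (K A : Category) (M : Monad K) (l : Functor A K)
  (inv : forall a : A, Hom (T M (l a)) (l a))
  (Hinv1 : forall a, inv a ∘ eta M (l a) = idm (l a))
  (Hinv2 : forall a, eta M (l a) ∘ inv a = idm (T M (l a)))
  (Hcod : Codense (FixFunctor M l inv Hinv1 Hinv2)) :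
  IsRightKan l l (T M) inv.
Proof.
  split.
  { intros a a' f. symmetry. apply (fix_hom_ok Hinv1 Hinv2). }
  intros S0 sigma Hsig.
  pose (J := FixFunctor M l inv Hinv1 Hinv2).
  pose (sigma' := fun a : A => (ext (J a) (S0 (l a)) (sigma a) : Hom (Sbar M S0 (J a)) (J a))).
  destruct (proj2 Hcod (Sbar M S0) sigma') as [tau' [[Hnat Heq] Huniq]].
  { intros a a' f. apply alg_hom_eq. simpl.
    rewrite <- comp_assoc, <- fmap_comp, Hsig, fmap_comp, comp_assoc.
    rewrite <- (fix_hom_ok Hinv1 Hinv2). symmetry; apply comp_assoc. }
  pose (t := fun x : K => (proj1_sig (tau' (freeAlg x)) : Hom (T M (S0 (T M x))) (T M x))).
  assert (Tnat : forall x y (g : Hom x y), fmap (T M) g ∘ t x = t y ∘ fmap (T M) (fmap S0 (fmap (T M) g))).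
  { intros x y g. symmetry. exact (f_equal (@proj1_sig _ _) (Hnat _ _ (freeMap _ _ g))). }
  assert (Teq : forall a, inv a ∘ t (l a) = (inv a ∘ fmap (T M) (sigma a)) ∘ fmap (T M) (fmap S0 (inv a))).
  { intros a. pose proof (f_equal (@proj1_sig _ _) (Hnat _ _ (ext (J a) (l a) (idm (l a))))) as E.
    pose proof (f_equal (@proj1_sig _ _) (Heq a)) as E'. simpl in E, E'.
    rewrite fmap_id, comp_idr in E. rewrite comp_idl in E'. unfold t. etransitivity; [symmetry; exact E|]. refine (f_equal (fun z => z ∘ _) _). exact E'. }
  assert (Tuniq : forall tau2 : forall b : K, Hom (S0 b) (T M b),
     (forall (b b' : K) (g : Hom b b'), tau2 b' ∘ fmap S0 g = fmap (T M) g ∘ tau2 b) ->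
     (forall a : A, inv a ∘ tau2 (l a) = sigma a) ->
     forall x, t x = mu M x ∘ fmap (T M) (mu M x ∘ tau2 (T M x))).
  { intros tau2 N2 E2.
    pose (rho := fun X : AlgCat M =>
       (ext X (S0 (acar X)) (astr X ∘ tau2 (acar X)) : Hom (Sbar M S0 X) X)).
    assert (R : forall b, rho b = tau' b).
    { apply Huniq.
      - intros X Y [h Hh]. apply alg_hom_eq. simpl.
        rewrite <- comp_assoc, <- fmap_comp, <- comp_assoc, N2.
        rewrite (comp_assoc h), Hh, <- comp_assoc, <- fmap_comp, (comp_assoc h), Hh, <- comp_assoc. reflexivity.
      - intros a. apply alg_hom_eq. simpl. rewrite comp_idl, E2. reflexivity. }
    intros x. pose proof (f_equal (@proj1_sig _ _) (R (freeAlg x))) as E. simpl in E.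
    unfold t. etransitivity; [symmetry; exact E|]. reflexivity. }
  clearbody t.
  exists (fun x => t x ∘ (eta M (S0 (T M x)) ∘ fmap S0 (eta M x))).
  split; [split|].
  - intros x y g.
    rewrite <- !comp_assoc.
    transitivity (t y ∘ (eta M (S0 (T M y)) ∘ (fmap S0 (fmap (T M) g) ∘ fmap S0 (eta M x)))).
    { rewrite <- !fmap_comp, eta_nat. reflexivity. }
    transitivity (t y ∘ (fmap (T M) (fmap S0 (fmap (T M) g)) ∘ (eta M (S0 (T M x)) ∘ fmap S0 (eta M x)))).
    { f_equal. rewrite !comp_assoc. f_equal. symmetry; apply eta_nat. }
    rewrite comp_assoc, <- Tnat. symmetry; apply comp_assoc.
  - intros a.
    rewrite (comp_assoc (inv a)), Teq.
    rewrite <- !comp_assoc. rewrite (comp_assoc (fmap (T M) (fmap S0 (inv a)))), eta_nat.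
    rewrite <- !comp_assoc, <- fmap_comp, Hinv1, fmap_id, comp_idr.
    rewrite eta_nat, comp_assoc, Hinv1.
    apply comp_idl.
  - intros tau2 N2 E2 x. rewrite (Tuniq tau2 N2 E2 x).
    rewrite <- !comp_assoc, (comp_assoc (fmap (T M) _)), eta_nat.
    rewrite <- comp_assoc, (comp_assoc (mu M x)), mu_eta_l, comp_idl.
    rewrite <- comp_assoc, N2, comp_assoc, mu_eta_r. symmetry. apply comp_idl.
Qed.

Theorem proposition5p5 (K A : Category) (M : Monad K) (l : Functor A K)
  (Hff : FullyFaithful l)
  (inv : forall a : A, Hom (T M (l a)) (l a))
  (Hinv1 : forall a, inv a ∘ eta M (l a) = idm (l a))
  (Hinv2 : forall a, eta M (l a) ∘ inv a = idm (T M (l a)))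
  (Hmu : forall a, IsIso (mu M (l a)))
  (Hcod : Codense (FixFunctor M l inv Hinv1 Hinv2)) :
  GenericallyIdempotent M /\ IsCodensityMonadOf l M.
Proof.
  assert (C : IsCodensityMonadOf l M).
  { exists inv. split; [exact (kan _ _ _ _ _ _ _ Hcod)|]. split; [exact Hinv1|].
    intros a. rewrite (fix_mu_eq Hinv2). reflexivity. }
  split; [|exact C]. exists A, l. split; assumption.
Qed.
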